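(* Let $h:H\to K$ be an isomorphism between subgroups $K\subset H$ of a group $G$, and suppose there is $z\in H$ commuting with every element of $K$ such that $z^2\notin K$. Let $\mathcal F\subset\mathcal P_G$ be an $h$-invariant left-invariant ideal. If $A\subset H$ and $A\in\tau^\alpha(\mathcal F)$ for some ordinal $\alpha$, then $h(A)\cup z\,h(A)\in\tau^{\alpha+1}(\mathcal F)$.
   Context: $\mathcal F$ is $h$-invariant if for every $A\subset H$: $A\in\mathcal F$ iff $h(A)\in\mathcal F$. An ideal is closed under subsets and finite unions; left-invariant: $xF\in\mathcal F$ for $F\in\mathcal F$, $x\in G$. $\tau(\mathcal F)=\{A\subset G: xA\cap yA\in\mathcal F$ for all distinct $x,y\in G\}$, $\tau^0(\mathcal F)=\mathcal F$, $\tau^{<\alpha}(\mathcal F)=\bigcup_{\beta<\alpha}\tau^\beta(\mathcal F)$, $\tau^\alpha(\mathcal F)=\tau(\tau^{<\alpha}(\mathcal F))$ for $\alpha>0$. *)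

(* Defs.v *)
From Stdlib Require Import Classical.

Definition is_group {G : Type} (mul : G -> G -> G) (e : G) (inv : G -> G) : Prop :=
  (forall a b c, mul a (mul b c) = mul (mul a b) c) /\
  (forall a, mul e a = a /\ mul a e = a) /\
  (forall a, mul (inv a) a = e /\ mul a (inv a) = e).

Definition is_subgroup {G : Type} (mul : G -> G -> G) (e : G) (inv : G -> G)
  (S : G -> Prop) : Prop :=
  S e /\ (forall a b, S a -> S b -> S (mul a b)) /\ (forall a, S a -> S (inv a)).

Definition subset {G : Type} (A B : G -> Prop) : Prop := forall g, A g -> B g.
Definition union {G : Type} (A B : G -> Prop) : G -> Prop := fun g => A g \/ B g.
Definition inter {G : Type} (A B : G -> Prop) : G -> Prop := fun g => A g /\ B g.
Definition emptyset {G : Type} : G -> Prop := fun _ => False.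

Definition lmul {G : Type} (mul : G -> G -> G) (x : G) (A : G -> Prop) : G -> Prop :=
  fun g => exists a, A a /\ g = mul x a.

Definition image {G : Type} (h : G -> G) (A : G -> Prop) : G -> Prop :=
  fun g => exists a, A a /\ g = h a.

Definition is_group_iso {G : Type} (mul : G -> G -> G) (H K : G -> Prop)
  (h : G -> G) : Prop :=
  (forall a, H a -> K (h a)) /\
  (forall a b, H a -> H b -> h (mul a b) = mul (h a) (h b)) /\
  (forall a b, H a -> H b -> h a = h b -> a = b) /\
  (forall k, K k -> exists a, H a /\ h a = k).

Definition h_invariant {G : Type} (H : G -> Prop) (h : G -> G)
  (F : (G -> Prop) -> Prop) : Prop :=
  forall A, subset A H -> (F A <-> F (image h A)).

Definition is_ideal {G : Type} (F : (G -> Prop) -> Prop) : Prop :=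
  F emptyset /\
  (forall A B, F A -> subset B A -> F B) /\
  (forall A B, F A -> F B -> F (union A B)).

Definition left_invariant {G : Type} (mul : G -> G -> G)
  (F : (G -> Prop) -> Prop) : Prop :=
  forall A x, F A -> F (lmul mul x A).

Definition tau {G : Type} (mul : G -> G -> G) (X : (G -> Prop) -> Prop)
  : (G -> Prop) -> Prop :=
  fun A => forall x y, x <> y -> X (inter (lmul mul x A) (lmul mul y A)).

(* Ordinals are represented as elements of a strict well-order (I, R). *)
Definition strict_well_order {I : Type} (R : I -> I -> Prop) : Prop :=
  well_founded R /\
  (forall a b c, R a b -> R b c -> R a c) /\
  (forall a b, R a b \/ a = b \/ R b a).

Definition is_succ {I : Type} (R : I -> I -> Prop) (a b : I) : Prop :=
  R a b /\ forall c, R a c -> c = b \/ R b c.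

(* tau_level mul F R i A  <->  A ∈ tau^i(F), where
   tau^0(F) = F (i minimal),
   tau^i(F) = tau(tau^{<i}(F)) for i > 0, tau^{<i}(F) = ⋃_{j<i} tau^j(F). *)
Inductive tau_level {G I : Type} (mul : G -> G -> G) (F : (G -> Prop) -> Prop)
  (R : I -> I -> Prop) : I -> (G -> Prop) -> Prop :=
| tau_level_zero : forall i A,
    (forall j, ~ R j i) -> F A -> tau_level mul F R i A
| tau_level_pos : forall i A,
    (exists j, R j i) ->
    (forall x y, x <> y ->
       exists j, R j i /\ tau_level mul F R j (inter (lmul mul x A) (lmul mul y A))) ->
    tau_level mul F R i A.

(* Main.v *)
Require Import Defs.
From Stdlib Require Import Classical.

Lemma g_lcancel {G} (mul : G -> G -> G) e inv : is_group mul e inv ->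
  forall a b c, mul a b = mul a c -> b = c.
Proof.
  intros [As [Id Iv]] a b c E.
  assert (mul (inv a) (mul a b) = mul (inv a) (mul a c)) by now rewrite E.
  rewrite !As in H. destruct (Iv a) as [H1 _]. rewrite H1 in H.
  destruct (Id b), (Id c). congruence.
Qed.

Lemma g_rcancel {G} (mul : G -> G -> G) e inv : is_group mul e inv ->
  forall a b c, mul b a = mul c a -> b = c.
Proof.
  intros [As [Id Iv]] a b c E.
  assert (mul (mul b a) (inv a) = mul (mul c a) (inv a)) by now rewrite E.
  rewrite <- !As in H. destruct (Iv a) as [_ H1]. rewrite H1 in H.
  destruct (Id b), (Id c). congruence.
Qed.

Lemma g_solve {G} (mul : G -> G -> G) e inv : is_group mul e inv ->
  forall x y b1 b2, mul x b1 = mul y b2 -> b1 = mul (mul (inv x) y) b2.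
Proof.
  intros HG x y b1 b2 E. destruct HG as [As [Id Iv]].
  rewrite <- As, <- E, As. destruct (Iv x) as [H1 _]. rewrite H1. now destruct (Id b1).
Qed.

Lemma sg_div {G} (mul : G -> G -> G) e inv S : is_group mul e inv ->
  is_subgroup mul e inv S -> forall u k v, S u -> S k -> u = mul v k -> S v.
Proof.
  intros [As [Id Iv]] [S1 [S2 S3]] u k v Su Sk E.
  replace v with (mul u (inv k)). apply S2; auto.
  rewrite E, <- As. destruct (Iv k) as [_ H1]. rewrite H1. now destruct (Id v).
Qed.

Lemma sg_ldiv {G} (mul : G -> G -> G) e inv S : is_group mul e inv ->
  is_subgroup mul e inv S -> forall u k v, S u -> S k -> u = mul k v -> S v.
Proof.
  intros [As [Id Iv]] [S1 [S2 S3]] u k v Su Sk E.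
  replace v with (mul (inv k) u). apply S2; auto.
  rewrite E, As. destruct (Iv k) as [H1 _]. rewrite H1. now destruct (Id v).
Qed.


Lemma lvl_sub {G I} (mul : G -> G -> G) (F : (G -> Prop) -> Prop) (R : I -> I -> Prop)
  (Fid : is_ideal F) (Rwf : well_founded R) : forall i A, tau_level mul F R i A -> forall B, subset B A ->
  tau_level mul F R i B.
Proof.
  intro i. induction i as [i IH] using (well_founded_ind Rwf).
  intros A HA B SB. inversion HA; subst.
  - apply tau_level_zero; auto. destruct Fid as [_ [Fs _]]. eauto.
  - apply tau_level_pos; auto. intros x y Hxy.
    destruct (H0 x y Hxy) as [j [Rj Hj]]. exists j. split; auto.
    apply (IH j Rj _ Hj). intros g [[b1 [Hb1 E1]] [b2 [Hb2 E2]]].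
    split; [exists b1 | exists b2]; auto.
Qed.

Lemma lvl_lmul {G I} (mul : G -> G -> G) e inv (HG : is_group mul e inv)
  (F : (G -> Prop) -> Prop) (R : I -> I -> Prop)
  (Fid : is_ideal F) (Flinv : left_invariant mul F) (Rwf : well_founded R) :
  forall i A g, tau_level mul F R i A -> tau_level mul F R i (lmul mul g A).
Proof.
  intros i A g HA. inversion HA; subst.
  - apply tau_level_zero; auto.
  - apply tau_level_pos; auto. intros x y Hxy.
    assert (N : mul x g <> mul y g) by (intro E; apply Hxy; eapply g_rcancel; eauto).
    destruct (H0 _ _ N) as [j [Rj Hj]]. exists j. split; auto.
    apply (lvl_sub mul F R Fid Rwf j _ Hj).
    destruct HG as [As _].
    intros w [[c1 [[a1 [Ha1 E1]] Ew1]] [c2 [[a2 [Ha2 E2]] Ew2]]]; subst.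
    split; [exists a1 | exists a2]; split; auto; rewrite As; congruence.
Qed.

Lemma lvl_empty {G I} (mul : G -> G -> G) (F : (G -> Prop) -> Prop) (R : I -> I -> Prop)
  (Fid : is_ideal F) (Rwf : well_founded R) : forall i, tau_level mul F R i emptyset.
Proof.
  intro i. induction i as [i IH] using (well_founded_ind Rwf).
  destruct (classic (exists j, R j i)) as [[j Rj] | N].
  - apply tau_level_pos; eauto. intros x y _. exists j. split; auto.
    apply (lvl_sub mul F R Fid Rwf j _ (IH j Rj)).
    intros w [[b [Hb _]] _]. exact Hb.
  - apply tau_level_zero; [ | apply Fid]. intros j Rj; eauto.
Qed.

Lemma h_e {G} (mul : G -> G -> G) e inv (HG : is_group mul e inv) H K h :
  is_subgroup mul e inv H -> is_group_iso mul H K h -> h e = e.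
Proof.
  intros [He _] [_ [Hm _]].
  pose proof (Hm e e He He) as E.
  destruct HG as [As [Id Iv]]. destruct (Id e) as [E1 _]. rewrite E1 in E.
  destruct (Id (h e)) as [_ E2].
  symmetry. apply (g_lcancel mul e inv (conj As (conj Id Iv)) (h e)). congruence.
Qed.

Lemma lvl_h {G I} (mul : G -> G -> G) e inv (HG : is_group mul e inv)
  (H K : G -> Prop) (HH : is_subgroup mul e inv H) (HK : is_subgroup mul e inv K)
  (h : G -> G) (Hh : is_group_iso mul H K h)
  (F : (G -> Prop) -> Prop) (R : I -> I -> Prop)
  (Finv : h_invariant H h F) (Fid : is_ideal F) (Flinv : left_invariant mul F)
  (Rwf : well_founded R) :
  forall i C, subset C H -> tau_level mul F R i C -> tau_level mul F R i (image h C).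
Proof.
  intro i. induction i as [i IH] using (well_founded_ind Rwf).
  intros C CH HC. inversion HC; subst.
  - apply tau_level_zero; auto. apply (proj1 (Finv C CH)); auto.
  - apply tau_level_pos; auto. intros x y Hxy.
    destruct Hh as [hK [hm [hinj hsur]]].
    destruct (classic (K (mul (inv x) y))) as [Kg | nKg].
    + destruct (hsur _ Kg) as [a [Ha Eha]].
      assert (Nae : e <> a).
      { intro E; subst a. rewrite (h_e mul e inv HG H K h HH (conj hK (conj hm (conj hinj hsur)))) in Eha.
        apply Hxy. destruct HG as [As [Id Iv]].
        destruct (Id x) as [_ E1]. rewrite <- E1, Eha, As. destruct (Iv x) as [_ E2].
        rewrite E2. now destruct (Id y). }
      destruct (H1 _ _ Nae) as [j [Rj Hj]]. exists j. split; auto.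
      assert (SH : subset (inter (lmul mul e C) (lmul mul a C)) H).
      { intros w [[c [Hc E]] _]. subst. destruct HH as [He [Hm _]]. auto. }
      pose proof (IH j Rj _ SH Hj) as T.
      apply (lvl_lmul mul e inv HG F R Fid Flinv Rwf j _ x) in T.
      apply (lvl_sub mul F R Fid Rwf j _ T).
      intros w [[b1 [[c1 [Hc1 E1]] Ew1]] [b2 [[c2 [Hc2 E2]] Ew2]]]. subst b1 b2.
      assert (Eb := g_solve mul e inv HG x y _ _ (eq_trans (eq_sym Ew1) Ew2)).
      exists (h c1). split; auto. exists c1. split; auto.
      assert (c1 = mul a c2).
      { apply hinj; auto. destruct HH as [_ [Hm _]]; auto. rewrite hm; auto. congruence. }
      split; [exists c1 | exists c2]; split; auto.
      destruct HG as [_ [Id _]]. now destruct (Id c1).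
    + destruct H0 as [j Rj]. exists j. split; auto.
      apply (lvl_sub mul F R Fid Rwf j _ (lvl_empty mul F R Fid Rwf j)).
      intros w [[b1 [[c1 [Hc1 E1]] Ew1]] [b2 [[c2 [Hc2 E2]] Ew2]]]. subst b1 b2.
      assert (Eb := g_solve mul e inv HG x y _ _ (eq_trans (eq_sym Ew1) Ew2)).
      apply nKg. apply (sg_div mul e inv K HG HK (h c1) (h c2)); auto.
Qed.

Lemma g_rdiv {G} (mul : G -> G -> G) e inv : is_group mul e inv ->
  forall u k v, u = mul v k -> mul u (inv k) = v.
Proof.
  intros [As [Id Iv]] u k v E. subst. rewrite <- As. destruct (Iv k) as [_ H1].
  rewrite H1. now destruct (Id v).
Qed.

Lemma pick_a {G} (mul : G -> G -> G) e inv (HG : is_group mul e inv)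
  (H K : G -> Prop) (HH : is_subgroup mul e inv H)
  (h : G -> G) (Hh : is_group_iso mul H K h) x y :
  x <> y -> K (mul (inv x) y) -> exists a, H a /\ h a = mul (inv x) y /\ e <> a.
Proof.
  intros Hxy Kg. pose proof Hh as [hK [hm [hinj hsur]]].
  destruct (hsur _ Kg) as [a [Ha Eha]]. exists a. split; auto. split; auto.
  intro E; subst a. rewrite (h_e mul e inv HG H K h HH Hh) in Eha.
  apply Hxy. destruct HG as [As [Id Iv]].
  destruct (Id x) as [_ E1]. rewrite <- E1, Eha, As. destruct (Iv x) as [_ E2].
  rewrite E2. now destruct (Id y).
Qed.

Lemma main_claim (G : Type) (mul : G -> G -> G) (e : G) (inv : G -> G)
  (HG : is_group mul e inv)
  (H K : G -> Prop)
  (HH : is_subgroup mul e inv H) (HK : is_subgroup mul e inv K)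
  (KH : subset K H)
  (h : G -> G) (Hh : is_group_iso mul H K h)
  (z : G) (Hz : H z) (zcomm : forall k, K k -> mul z k = mul k z)
  (z2 : ~ K (mul z z))
  (F : (G -> Prop) -> Prop)
  (Finv : h_invariant H h F) (Flinv : left_invariant mul F) (Fid : is_ideal F)
  (I : Type) (R : I -> I -> Prop) (Rwf : well_founded R) :
  forall a A, subset A H -> tau_level mul F R a A -> forall b, R a b ->
  tau_level mul F R b (union (image h A) (lmul mul z (image h A))).
Proof.
  pose proof Hh as [hK [hm [hinj hsur]]].
  pose proof HG as [As [Id Iv]].
  pose proof HK as [Ke [Km Kinv]].
  assert (KhA : forall a, H a -> K (h a)) by auto.
  intro a. induction a as [a IH] using (well_founded_ind Rwf).
  intros A AH HA b Rab.
  apply tau_level_pos; [eauto|]. intros x y Hxy. exists a. split; auto.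
  inversion HA; subst.
  -
    assert (FB : F (union (image h A) (lmul mul z (image h A)))).
    { destruct Fid as [_ [_ Fu]]. apply Fu. apply (proj1 (Finv A AH)); auto.
      apply Flinv. apply (proj1 (Finv A AH)); auto. }
    pose proof (tau_level_zero mul F R a _ H0 FB) as T.
    apply (lvl_lmul mul e inv HG F R Fid Flinv Rwf a _ x) in T.
    apply (lvl_sub mul F R Fid Rwf a _ T). intros w [Hw _]. exact Hw.
  -
    destruct (classic (K (mul (inv x) y))) as [Kg | nKg].
    + destruct (pick_a mul e inv HG H K HH h Hh x y Hxy Kg) as [a0 [Ha0 [Eha0 Na0]]].
      destruct (H1 _ _ Na0) as [j [Rj Hj]].
      assert (SH : subset (inter (lmul mul e A) (lmul mul a0 A)) H).
      { intros w [[c [Hc E]] _]. subst. destruct HH as [He [Hm _]]. auto. }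
      pose proof (IH j Rj _ SH Hj a Rj) as T.
      apply (lvl_lmul mul e inv HG F R Fid Flinv Rwf a _ x) in T.
      apply (lvl_sub mul F R Fid Rwf a _ T).
      intros w [[b1 [Hb1 Ew1]] [b2 [Hb2 Ew2]]].
      assert (Eb := g_solve mul e inv HG x y _ _ (eq_trans (eq_sym Ew1) Ew2)).
      subst w.
      destruct Hb1 as [[a1 [Ha1 ->]] | [c1 [[a1 [Ha1 ->]] ->]]];
      destruct Hb2 as [[a2 [Ha2 ->]] | [c2 [[a2 [Ha2 ->]] ->]]].
      * assert (a1 = mul a0 a2).
        { apply hinj; auto. destruct HH as [_ [Hm _]]; auto. rewrite hm; auto. congruence. }
        exists (h a1). split; auto. left. exists a1. split; auto.
        split; [exists a1 | exists a2]; split; auto. symmetry; apply (Id a1).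
      * exfalso. apply z2. cut (K z); [intro Kz; apply Km; auto|].
        apply (sg_div mul e inv K HG HK (mul z (h a2)) (h a2)); auto.
        apply (sg_ldiv mul e inv K HG HK (h a1) (mul (inv x) y)); auto.
      * exfalso. apply z2. cut (K z); [intro Kz; apply Km; auto|].
        apply (sg_div mul e inv K HG HK (mul z (h a1)) (h a1)); auto.
        rewrite Eb. apply Km; auto.
      * assert (E2 : h a1 = mul (mul (inv x) y) (h a2)).
        { apply (g_lcancel mul e inv HG z). rewrite Eb, (As z), (zcomm _ Kg), As. reflexivity. }
        assert (a1 = mul a0 a2).
        { apply hinj; auto. destruct HH as [_ [Hm _]]; auto. rewrite hm; auto. congruence. }
        exists (mul z (h a1)). split; auto. right. exists (h a1). split; auto. exists a1. split; auto.
        split; [exists a1 | exists a2]; split; auto. symmetry; apply (Id a1).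
    + pose proof (lvl_h mul e inv HG H K HH HK h Hh F R Finv Fid Flinv Rwf a A AH HA) as ThA.
      destruct (classic (K (mul (mul (inv x) y) z))) as [Kgz | nKgz].
      * pose proof (lvl_lmul mul e inv HG F R Fid Flinv Rwf a _ x ThA) as T.
        apply (lvl_sub mul F R Fid Rwf a _ T).
        intros w [[b1 [Hb1 Ew1]] [b2 [Hb2 Ew2]]].
        assert (Eb := g_solve mul e inv HG x y _ _ (eq_trans (eq_sym Ew1) Ew2)).
        subst w.
        destruct Hb1 as [[a1 [Ha1 ->]] | [c1 [[a1 [Ha1 ->]] ->]]];
        destruct Hb2 as [[a2 [Ha2 ->]] | [c2 [[a2 [Ha2 ->]] ->]]].
        -- exfalso. apply nKg. apply (sg_div mul e inv K HG HK (h a1) (h a2)); auto.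
        -- exists (h a1). split; auto. exists a1. auto.
        -- exfalso. apply z2.
           set (k := mul (h a1) (inv (h a2))).
           assert (Kk : K k) by (apply Km; auto).
           assert (Eg : mul (inv x) y = mul z k).
           { unfold k. rewrite As. symmetry. apply (g_rdiv mul e inv HG). auto. }
           apply (sg_div mul e inv K HG HK (mul (mul (inv x) y) z) k); auto.
           rewrite Eg, <- !As, <- zcomm; auto.
        -- exfalso. apply z2. cut (K z); [intro Kz; apply Km; auto|].
           apply (sg_div mul e inv K HG HK (mul z (h a1)) (h a1)); auto.
           rewrite Eb, As. apply Km; auto.
      * pose proof (lvl_lmul mul e inv HG F R Fid Flinv Rwf a _ (mul x z) ThA) as T.
        apply (lvl_sub mul F R Fid Rwf a _ T).
        intros w [[b1 [Hb1 Ew1]] [b2 [Hb2 Ew2]]].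
        assert (Eb := g_solve mul e inv HG x y _ _ (eq_trans (eq_sym Ew1) Ew2)).
        subst w.
        destruct Hb1 as [[a1 [Ha1 ->]] | [c1 [[a1 [Ha1 ->]] ->]]];
        destruct Hb2 as [[a2 [Ha2 ->]] | [c2 [[a2 [Ha2 ->]] ->]]].
        -- exfalso. apply nKg. apply (sg_div mul e inv K HG HK (h a1) (h a2)); auto.
        -- exfalso. apply nKgz. apply (sg_div mul e inv K HG HK (h a1) (h a2)); auto.
           rewrite Eb, As. reflexivity.
        -- exists (h a1). split; [exists a1; auto | apply As].
        -- exfalso. apply nKg.
           set (k := mul (h a1) (inv (h a2))).
           assert (Kk : K k) by (apply Km; auto).
           assert (Eg : mul (mul (inv x) y) z = mul z k).
           { unfold k. rewrite As. symmetry. apply (g_rdiv mul e inv HG). rewrite Eb, As. reflexivity. }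
           rewrite zcomm in Eg; auto.
           apply (g_rcancel mul e inv HG) in Eg. rewrite Eg. exact Kk.
Qed.

Theorem lemma6p3 (G : Type) (mul : G -> G -> G) (e : G) (inv : G -> G)
  (HG : is_group mul e inv)
  (H K : G -> Prop)
  (HH : is_subgroup mul e inv H) (HK : is_subgroup mul e inv K)
  (KH : subset K H)
  (h : G -> G) (Hh : is_group_iso mul H K h)
  (z : G) (Hz : H z) (zcomm : forall k, K k -> mul z k = mul k z)
  (z2 : ~ K (mul z z))
  (F : (G -> Prop) -> Prop)
  (Finv : h_invariant H h F) (Flinv : left_invariant mul F) (Fid : is_ideal F)
  (I : Type) (R : I -> I -> Prop) (HR : strict_well_order R)
  (alpha alpha1 : I) (Hsucc : is_succ R alpha alpha1)
  (A : G -> Prop) (AH : subset A H)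
  (HA : tau_level mul F R alpha A) :
  tau_level mul F R alpha1 (union (image h A) (lmul mul z (image h A))).
Proof.
  exact (main_claim G mul e inv HG H K HH HK KH h Hh z Hz zcomm z2 F Finv Flinv Fid
           I R (proj1 HR) alpha A AH HA alpha1 (proj1 Hsucc)).
Qed.
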